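(* Let $A\in\mathbb{R}^{n\times n}$ be symmetric with rank $r$. (1) Consider the linear program in the variables $H^+,H^-\in\mathbb{R}^{n\times n}$: minimize $\sum_{i,j}(H^+_{ij}+H^-_{ij})$ subject to $A(H^+-H^-)A=A$, $H^+\ge 0$, $H^-\ge 0$. For every extreme point $(H^+,H^-)$ of its feasible region, the matrix $H:=H^+-H^-$ has at most $r^2$ nonzero entries. Moreover this bound is sharp: for all $n\ge r\ge 1$ there is a symmetric $n\times n$ matrix $A$ of rank $r$ for which some extreme solution $H$ of this linear program has exactly $r^2$ nonzero entries. (2) Consider the linear program in the variables $H^+,H^-$ ranging over symmetric $n\times n$ matrices: minimize $\sum_{i,j}(H^+_{ij}+H^-_{ij})$ subject to $A(H^+-H^-)A=A$, $H^+\ge 0$, $H^-\ge 0$ (this is the linear program for $\min\{\|H\|_1: AHA=A,\ H^\top=H\}$). For every extreme point $(H^+,H^-)$ of its feasible region, the matrix $H:=H^+-H^-$ has at most $r^2+r$ nonzero entries. Moreover this bound is sharp for $n-2\ge r\ge 3$: for such $n,r$ there is a symmetric $n\times n$ matrix $A$ of rank $r$ for which some extreme solution $H$ of this linear program has exactly $r^2+r$ nonzero entries.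
   Context: For a matrix $H$, $\|H\|_1=\sum_{i,j}|H_{ij}|$ (the entrywise 1-norm). Inequalities $H\ge 0$ are entrywise. *)

(* Defs.v *)
From HB Require Import structures.
From mathcomp Require Import all_boot all_order all_algebra.
From mathcomp Require Import reals.
Set Implicit Arguments. Unset Strict Implicit. Unset Printing Implicit Defensive.
Import Order.TTheory GRing.Theory Num.Theory.
Local Open Scope ring_scope.

Section Defs.
Variables (R : realType) (n : nat).

Definition feas_gen (A : 'M[R]_n) (P : 'M[R]_n * 'M[R]_n) : Prop :=
  A *m (P.1 - P.2) *m A = A /\ (forall i j, 0 <= P.1 i j) /\ (forall i j, 0 <= P.2 i j).

Definition feas_sym (A : 'M[R]_n) (P : 'M[R]_n * 'M[R]_n) : Prop :=
  feas_gen A P /\ P.1^T = P.1 /\ P.2^T = P.2.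

Definition extreme_point (S : 'M[R]_n * 'M[R]_n -> Prop) (x : 'M[R]_n * 'M[R]_n) : Prop :=
  S x /\ forall (y z : 'M[R]_n * 'M[R]_n) (t : R), S y -> S z -> 0 < t < 1 ->
    x = (t *: y.1 + (1 - t) *: z.1, t *: y.2 + (1 - t) *: z.2) -> y = z.

Definition nnz (H : 'M[R]_n) : nat := #|[set p : 'I_n * 'I_n | H p.1 p.2 != 0]|.

End Defs.

(* Main.v *)
Require Import Defs.
From HB Require Import structures.
From mathcomp Require Import all_boot all_order all_algebra.
From mathcomp Require Import reals.
From mathcomp Require Import ring lra zify.
Set Implicit Arguments. Unset Strict Implicit. Unset Printing Implicit Defensive.
Import Order.TTheory GRing.Theory Num.Theory.
Local Open Scope ring_scope.




Lemma ker_exists (R : realType) (I : finType) (S : {set I}) d (v : I -> 'rV[R]_d) :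
  (d < #|S|)%N -> exists c : I -> R,
    [/\ exists i, c i != 0, forall i, i \notin S -> c i = 0 & \sum_i c i *: v i = 0].
Proof.
move=> hd.
pose M : 'M[R]_(#|S|, d) := \matrix_(k < #|S|) v (enum_val k).
have : kermx M != 0.
  apply/eqP => h0.
  have := mxrank_ker M; rewrite h0 mxrank0 => /esym/eqP.
  rewrite subn_eq0 => hle.
  have := leq_trans hle (rank_leq_col M); rewrite leqNgt hd //.
case/rowV0Pn => w; rewrite sub_kermx => /eqP wM wn0.
exists (fun i => \sum_(k | enum_val k == i) w 0 k); split.
- case/rV0Pn: wn0 => k hk; exists (enum_val k).
  rewrite (big_pred1 k) // => k' /=; exact: (inj_eq enum_val_inj).
- move=> i hi; apply: big1 => k /eqP ek; move: hi; rewrite -ek enum_valP //.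
- rewrite -[RHS]wM mulmx_sum_row.
  under eq_bigr do rewrite scaler_suml.
  rewrite (exchange_big_dep xpredT) //=.
  apply: eq_bigr => k _.
  rewrite (big_pred1 (enum_val k)) => [|i]; last by rewrite /= eq_sym.
  by rewrite rowK.
Qed.

Lemma ker_mat (R : realType) (I : finType) (S : {set I}) r (T : {set 'I_r * 'I_r})
  (F : I -> 'M[R]_r) : (#|T| < #|S|)%N -> exists c : I -> R,
    [/\ exists i, c i != 0, forall i, i \notin S -> c i = 0 &
        forall q, q \in T -> (\sum_i c i *: F i) q.1 q.2 = 0].
Proof.
move=> hT.
have [c [h1 h2 h3]] := ker_exists
  (fun i => \row_(k < #|T|) F i (enum_val k).1 (enum_val k).2) hT.
exists c; split => // q qT.
move/rowP: h3 => /(_ (enum_rank_in qT q)).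
rewrite summxE mxE => <-.
rewrite summxE; apply: eq_bigr => i _; rewrite !mxE enum_rankK_in //.
Qed.


Lemma perturb (R : realType) n (P : 'M[R]_n * 'M[R]_n) (D : 'M[R]_n) :
 (forall i j, 0 <= P.1 i j) -> (forall i j, 0 <= P.2 i j) ->
 (forall i j, D i j != 0 -> (P.1 i j != 0) || (P.2 i j != 0)) ->
 exists e : R, exists D1 D2 : 'M[R]_n, [/\ 0 < e, D1 - D2 = D,
   (forall i j, 0 <= P.1 i j + e * D1 i j /\ 0 <= P.1 i j - e * D1 i j),
   (forall i j, 0 <= P.2 i j + e * D2 i j /\ 0 <= P.2 i j - e * D2 i j) &
   (P.1^T = P.1 -> P.2^T = P.2 -> D^T = D -> D1^T = D1 /\ D2^T = D2)].
Proof.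
move=> h1 h2 hs.
pose rho i j := if P.1 i j != 0 then P.1 i j else P.2 i j.
pose K := \sum_i \sum_j `|D i j| / rho i j.
have rho0 i j : 0 <= rho i j by rewrite /rho; case: ifP.
have K0 : 0 <= K by apply: sumr_ge0 => i _; apply: sumr_ge0 => j _; apply: divr_ge0.
pose e := (1 + K)^-1.
have e0 : 0 < e by rewrite invr_gt0; lra.
have key i j : e * `|D i j| <= rho i j.
  have [->|dn0] := eqVneq (D i j) 0; first by rewrite normr0 mulr0.
  have rp : 0 < rho i j.
    move: (hs i j dn0); rewrite /rho; case: ifP => [h _|h].
      by rewrite lt_def h h1.
    by rewrite /= => h'; rewrite lt_def h' h2.
  have t : `|D i j| / rho i j <= K.
    rewrite /K (bigD1 i) //= (bigD1 j) //=.
    have : 0 <= \sum_(j' | j' != j) `|D i j'| / rho i j'.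
      by apply: sumr_ge0 => j' _; apply: divr_ge0.
    have : 0 <= \sum_(i0 | i0 != i) \sum_j0 `|D i0 j0| / rho i0 j0.
      apply: sumr_ge0 => i' _; apply: sumr_ge0 => j' _; apply: divr_ge0 => //.
    lra.
  move: t; rewrite ler_pdivrMr // => t.
  rewrite /e mulrC -/(_ / _) ler_pdivrMr; last lra.
  nra.
exists e, (\matrix_(i,j) if P.1 i j != 0 then D i j else 0),
  (\matrix_(i,j) if P.1 i j != 0 then 0 else - D i j); split => //.
- by apply/matrixP => i j; rewrite !mxE; case: ifP => _; rewrite ?subr0 ?sub0r ?opprK.
- move=> i j; rewrite !mxE; have := key i j; rewrite /rho.
  case: ifP => _ k; last by rewrite mulr0 addr0 subr0; split.
  have := ler_norm (e * D i j); have := ler_norm (- (e * D i j)).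
  rewrite normrN normrM (gtr0_norm e0); lra.
- move=> i j; rewrite !mxE; have := key i j; rewrite /rho.
  case: ifP => _ k; first by rewrite mulr0 addr0 subr0; split.
  have := ler_norm (e * D i j); have := ler_norm (- (e * D i j)).
  rewrite normrN normrM (gtr0_norm e0) mulrN; lra.
- move=> s1 s2 sD.
  have e1 i j : P.1 j i = P.1 i j by rewrite -[in RHS]s1 mxE.
  have eD i j : D j i = D i j by rewrite -[in RHS]sD mxE.
  by split; apply/matrixP => i j; rewrite !mxE e1 eD.
Qed.



Lemma not_ext_core (R : realType) n (A : 'M[R]_n) P (D : 'M[R]_n) :
  feas_gen A P -> D != 0 -> A *m D *m A = 0 ->
  (forall i j, D i j != 0 -> (P.1 i j != 0) || (P.2 i j != 0)) ->
  exists y z, [/\ feas_gen A y, feas_gen A z,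
    P = ((2^-1 : R) *: y.1 + (1 - 2^-1) *: z.1, (2^-1 : R) *: y.2 + (1 - 2^-1) *: z.2),
    y != z &
    (P.1^T = P.1 -> P.2^T = P.2 -> D^T = D ->
       y.1^T = y.1 /\ y.2^T = y.2 /\ z.1^T = z.1 /\ z.2^T = z.2)].
Proof.
move=> [hA [h1 h2]] Dn0 AD hs.
have [e [D1 [D2 [e0 hD n1 n2 hsym]]]] := perturb h1 h2 hs.
exists (P.1 + e *: D1, P.2 + e *: D2), (P.1 - e *: D1, P.2 - e *: D2); split.
- split; last split => i j; rewrite ?mxE; try by case: (n1 i j). 2: by case: (n2 i j).
  have -> : (P.1 + e *: D1) - (P.2 + e *: D2) = (P.1 - P.2) + e *: D.
    by apply/matrixP => i j; rewrite -hD !mxE; ring.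
  by rewrite mulmxDr mulmxDl hA -scalemxAr -scalemxAl AD scaler0 addr0.
- split; last split => i j; rewrite ?mxE ?mulNr; try by case: (n1 i j). 2: by case: (n2 i j).
  have -> : (P.1 - e *: D1) - (P.2 - e *: D2) = (P.1 - P.2) - e *: D.
    by apply/matrixP => i j; rewrite -hD !mxE; ring.
  by rewrite mulmxBr mulmxBl hA -scalemxAr -scalemxAl AD scaler0 subr0.
- case: P {hA h1 h2 hs n1 n2 hsym} => P1 P2 /=.
  congr pair; apply/matrixP => i j; rewrite !mxE; lra.
- apply/eqP => -[] /matrixP e1 /matrixP e2; move/eqP: Dn0; apply.
  apply/matrixP => i j; rewrite -hD !mxE.
  have := e1 i j; have := e2 i j; rewrite !mxE => f2 f1.
  have a1 : e * D1 i j == 0 by apply/eqP; lra.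
  have a2 : e * D2 i j == 0 by apply/eqP; lra.
  move: a1 a2; rewrite !mulf_eq0 (gt_eqF e0) /= => /eqP-> /eqP->; rewrite subr0.
  by [].
- move=> s1 s2 sD; have [t1 t2] := hsym s1 s2 sD.
  have E (M : 'M[R]_n) : M^T = M -> forall i j, M j i = M i j.
    by move=> hM i j; rewrite -[in RHS]hM mxE.
  split; [|split; [|split]]; apply/matrixP => i j; rewrite !mxE /=.
  - by rewrite (E _ s1 i j) (E _ t1 i j).
  - by rewrite (E _ s2 i j) (E _ t2 i j).
  - by rewrite (E _ s1 i j) (E _ t1 i j).
  - by rewrite (E _ s2 i j) (E _ t2 i j).
Qed.


Lemma pid_mulE (R : realType) n r (M : 'M[R]_n) i j :
  (pid_mx r *m M) i j = ((i < r)%N)%:R * M i j.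
Proof.
rewrite mxE (bigD1 i) //= big1 ?addr0 => [|k ki]; rewrite mxE.
  by rewrite eqxx.
by rewrite (_ : (i == k :> nat) = false) ?mul0r //; apply/negP => /eqP/val_inj ik; rewrite ik eqxx in ki.
Qed.

Lemma mul_pidE (R : realType) n r (M : 'M[R]_n) i j :
  (M *m pid_mx r) i j = M i j * ((j < r)%N)%:R.
Proof.
rewrite mxE (bigD1 j) //= big1 ?addr0 => [|k ki]; rewrite mxE.
  by rewrite eqxx.
by rewrite (_ : (k == j :> nat) = false) ?mulr0 //; apply/negP => /eqP/val_inj ik; rewrite ik eqxx in ki.
Qed.

Lemma sum_lt (R : realType) n r : (r <= n)%N -> \sum_(k < n) (((k < r)%N)%:R : R) = r%:R.
Proof.
move=> h; have -> : (r%:R : R) = \sum_(k < r) 1 by rewrite sumr_const card_ord.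
rewrite (big_ord_widen n (fun _ => 1 : R) h) [RHS]big_mkcond /=.
by apply: eq_bigr => k _; case: ifP.
Qed.

Definition Jm (R : realType) n r : 'M[R]_n := \matrix_(i,j) ((i < r)%N && (j < r)%N)%:R.

Lemma JmE (R : realType) n r i j : (Jm R n r) i j = ((i < r)%N)%:R * ((j < r)%N)%:R.
Proof. by rewrite mxE -natrM mulnb. Qed.

Lemma pidJ (R : realType) n r : pid_mx r *m Jm R n r = Jm R n r.
Proof. by apply/matrixP => i j; rewrite pid_mulE !JmE; case: (i < r)%N; rewrite ?mul1r ?mul0r. Qed.

Lemma Jpid (R : realType) n r : Jm R n r *m pid_mx r = Jm R n r.
Proof. by apply/matrixP => i j; rewrite mul_pidE !JmE; case: (j < r)%N; rewrite ?mulr1 ?mulr0. Qed.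

Lemma pidpid (R : realType) n r : (pid_mx r : 'M[R]_n) *m (pid_mx r : 'M[R]_n) = pid_mx r.
Proof. by apply/matrixP => i j; rewrite pid_mulE mxE; case: (i < r)%N; rewrite ?andbF ?mul1r ?mul0r. Qed.

Lemma JJ (R : realType) n r : (r <= n)%N -> Jm R n r *m Jm R n r = r%:R *: Jm R n r.
Proof.
move=> h; apply/matrixP => i j; rewrite mxE [RHS]mxE JmE.
under eq_bigr do rewrite !JmE.
rewrite -(sum_lt R h) mulr_suml; apply: eq_bigr => k _.
by case: (i < r)%N; case: (j < r)%N; case: (k < r)%N; rewrite /= ?mulr0 ?mul0r ?mulr1 ?mul1r.
Qed.

Lemma trJ (R : realType) n r : (Jm R n r)^T = Jm R n r.
Proof. by apply/matrixP => i j; rewrite !mxE andbC. Qed.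


Lemma card_lt n m : (m <= n)%N -> #|[set i : 'I_n | (i < m)%N]| = m.
Proof.
move=> h; rewrite -sum1_card (eq_bigl (fun i : 'I_n => (i < m)%N)) => [|i]; last by rewrite inE.
by rewrite -(big_ord_widen n (fun _ => 1%N) h) sum1_card card_ord.
Qed.

Lemma card_diag (T : finType) (B : {set T}) : #|[set (i, i) | i in B]| = #|B|.
Proof. by apply: card_imset => i j []. Qed.

Lemma card_swap (T : finType) (X : {set T * T}) : #|[set (p.2, p.1) | p in X]| = #|X|.
Proof. by apply: card_imset => [[a b] [c d]] /= [-> ->]. Qed.

Lemma swap_set n (X : {set 'I_n * 'I_n}) :
  [set (p.2, p.1) | p in X] = [set p | (p.2, p.1) \in X].
Proof.
apply/setP => -[a b]; rewrite inE /=; apply/imsetP/idP => [[[c d] h [-> ->]] //|h].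
by exists (b, a).
Qed.

Lemma diag_set (T : finType) (B : {set T}) :
  [set (i, i) | i in B] = [set p | (p.1 \in B) && (p.1 == p.2)].
Proof.
apply/setP => -[a b]; rewrite inE /=; apply/imsetP/andP => [[c h [-> ->]] //|[h /eqP <-]].
by exists a.
Qed.

Lemma card_sym n (X : {set 'I_n * 'I_n}) :
  (forall p, (p \in X) = ((p.2, p.1) \in X)) ->
  (#|X| <= 2 * #|[set p in X | (p.1 <= p.2)%N]|)%N.
Proof.
move=> hX; set U := [set p in X | _].
have sub : X \subset U :|: [set (p.2, p.1) | p in U].
  apply/subsetP => -[a b] h; rewrite swap_set !inE /=.
  case: (leqP a b) => ab; first by rewrite h.
  by rewrite -(hX (a, b)) h (ltnW ab) orbT.
have := subset_leq_card sub; have := cardsUI U [set (p.2, p.1) | p in U].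
rewrite card_swap => h1 h2; apply: leq_trans h2 _; by rewrite mul2n -addnn -h1 leq_addr.
Qed.

Lemma card_T r : (2 * #|[set q : 'I_r * 'I_r | (q.1 <= q.2)%N]| = r * r + r)%N.
Proof.
set U := [set q : 'I_r * 'I_r | _].
have := cardsUI U [set (p.2, p.1) | p in U].
rewrite card_swap swap_set.
have -> : U :|: [set p | (p.2, p.1) \in U] = setT.
  apply/setP => -[a b]; rewrite !inE /=; exact: leq_total.
have -> : U :&: [set p | (p.2, p.1) \in U] = [set (i, i) | i in [set: 'I_r]].
  rewrite diag_set; apply/setP => -[a b]; rewrite !inE /= -eqn_leq; by [].
rewrite card_diag !cardsT card_prod card_ord. by move=> ->; rewrite mul2n addnn.
Qed.


Lemma not_ext_gen (R : realType) n (A : 'M[R]_n) P (D : 'M[R]_n) :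
  extreme_point (feas_gen A) P -> D != 0 -> A *m D *m A = 0 ->
  (forall i j, D i j != 0 -> (P.1 i j != 0) || (P.2 i j != 0)) -> False.
Proof.
move=> [fP ext] Dn0 AD hs.
have [y [z [fy fz eP yz _]]] := not_ext_core fP Dn0 AD hs.
move/eqP: yz; apply; apply: (ext y z (2^-1)) => //.
apply/andP; split; lra.
Qed.

Lemma not_ext_sym (R : realType) n (A : 'M[R]_n) P (D : 'M[R]_n) :
  extreme_point (feas_sym A) P -> D^T = D -> D != 0 -> A *m D *m A = 0 ->
  (forall i j, D i j != 0 -> (P.1 i j != 0) || (P.2 i j != 0)) -> False.
Proof.
move=> [[fP [s1 s2]] ext] sD Dn0 AD hs.
have [y [z [fy fz eP yz hsym]]] := not_ext_core fP Dn0 AD hs.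
have [t1 [t2 [t3 t4]]] := hsym s1 s2 sD.
move/eqP: yz; apply; apply: (ext y z (2^-1)) => //.
apply/andP; split; lra.
Qed.

Lemma sum_delta_conj (R : realType) n m1 m2 (M1 : 'M[R]_(m1,n)) (M2 : 'M[R]_(n,m2))
  (c : 'I_n * 'I_n -> R) :
  \sum_p c p *: (M1 *m delta_mx p.1 p.2 *m M2) = M1 *m (\matrix_(i,j) c (i,j)) *m M2.
Proof.
rewrite [\matrix_(i,j) _]matrix_sum_delta mulmx_sumr mulmx_suml.
rewrite (eq_bigr (fun p => c (p.1, p.2) *: (M1 *m delta_mx p.1 p.2 *m M2))); last by case.
rewrite -(pair_bigA _ (fun i j => c (i, j) *: (M1 *m delta_mx i j *m M2))) /=.
apply: eq_bigr => i _; rewrite mulmx_sumr mulmx_suml; apply: eq_bigr => j _.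
by rewrite mxE -scalemxAr -scalemxAl.
Qed.

Lemma supp_le (R : realType) n (P : 'M[R]_n * 'M[R]_n) :
  (nnz (P.1 - P.2) <= #|[set p : 'I_n * 'I_n | (P.1 p.1 p.2 != 0%R) || (P.2 p.1 p.2 != 0%R)]|)%N.
Proof.
apply: subset_leq_card; apply/subsetP => p; rewrite !inE !mxE.
apply: contraLR; rewrite negb_or => /andP [/negPn/eqP -> /negPn/eqP ->].
by rewrite subrr eqxx.
Qed.

Lemma bound_gen (R : realType) n (A : 'M[R]_n) P :
  extreme_point (feas_gen A) P -> (nnz (P.1 - P.2) <= (\rank A) ^ 2)%N.
Proof.
move=> ext.
set S := [set p : 'I_n * 'I_n | (P.1 p.1 p.2 != 0) || (P.2 p.1 p.2 != 0)].
apply: leq_trans (supp_le P) _; rewrite -/S.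
rewrite leqNgt; apply/negP => hS.
have hT : (#|[set: 'I_(\rank A) * 'I_(\rank A)]| < #|S|)%N.
  by rewrite cardsT card_prod card_ord mulnn.
have [c [[i ci] cS cT]] := ker_mat
  (fun p : 'I_n * 'I_n => row_base A *m delta_mx p.1 p.2 *m col_base A) hT.
rewrite sum_delta_conj in cT.
set D := \matrix_(i,j) c (i,j) in cT.
have Z : row_base A *m D *m col_base A = 0.
  by apply/matrixP => k l; rewrite (cT (k,l)) ?inE // mxE.
apply: (not_ext_gen ext (D:=D)).
- apply/eqP => /matrixP /(_ i.1 i.2); rewrite !mxE -surjective_pairing.
  by move/eqP: ci.
- have -> : A *m D *m A = col_base A *m (row_base A *m D *m col_base A) *m row_base A.
    have e : forall k (Cb : 'M_(n, k)) (Rb : 'M_(k, n)),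
        Cb *m Rb = A -> A *m D *m A = Cb *m (Rb *m D *m Cb) *m Rb.
      by move=> k Cb Rb <-; rewrite !mulmxA.
    exact: e (mulmx_base A).
  by rewrite Z mulmx0 mul0mx.
- move=> i' j'; rewrite mxE => cn0.
  have : (i', j') \in S.
    by apply: contraR cn0 => h; rewrite (cS _ h) eqxx.
  by rewrite inE.
Qed.

Lemma bound_sym (R : realType) n (A : 'M[R]_n) P : A^T = A ->
  extreme_point (feas_sym A) P -> (nnz (P.1 - P.2) <= (\rank A) ^ 2 + \rank A)%N.
Proof.
move=> symA ext; have [[[_ [h1 h2]] [s1 s2]] _] := ext.
have e1 i j : P.1 j i = P.1 i j by rewrite -[in RHS]s1 mxE.
have e2 i j : P.2 j i = P.2 i j by rewrite -[in RHS]s2 mxE.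
set S := [set p : 'I_n * 'I_n | (P.1 p.1 p.2 != 0) || (P.2 p.1 p.2 != 0)].
apply: leq_trans (supp_le P) _; rewrite -/S leqNgt; apply/negP => hS.
have symS : forall p, (p \in S) = ((p.2, p.1) \in S) by case=> a b; rewrite !inE /= e1 e2.
have hc := card_sym symS; have ht := card_T (\rank A).
set T := [set q : 'I_(\rank A) * 'I_(\rank A) | (q.1 <= q.2)%N] in ht.
set Su := [set p in S | (p.1 <= p.2)%N] in hc.
have hT : (#|T| < #|Su|)%N.
  rewrite -(ltn_pmul2l (isT : (0 < 2)%N)) ht mulnn.
  exact: leq_trans hS hc.
have [c [[i ci] cS cT]] := ker_mat
  (fun p : 'I_n * 'I_n => (col_base A)^T *m (delta_mx p.1 p.2 + delta_mx p.2 p.1) *m col_base A) hT.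
set C := \matrix_(i,j) c (i,j).
set D := C + C^T.
have sumE : \sum_p c p *: ((col_base A)^T *m (delta_mx p.1 p.2 + delta_mx p.2 p.1) *m col_base A)
    = (col_base A)^T *m D *m col_base A.
  under eq_bigr do rewrite mulmxDr mulmxDl scalerDr.
  rewrite big_split /= sum_delta_conj.
  rewrite (reindex_inj (h := fun p : 'I_n * 'I_n => (p.2, p.1))) /=; last first.
    by case=> a b [a' b'] [-> ->].
  rewrite (sum_delta_conj _ _ (fun p => c (p.2, p.1))).
  have -> : \matrix_(i, j) c ((i, j).2, (i, j).1) = C^T by apply/matrixP => a b; rewrite !mxE.
  by rewrite -mulmxDl -mulmxDr.
have sD : D^T = D by apply/matrixP => a b; rewrite !mxE addrC.
set Z := (col_base A)^T *m D *m col_base A in sumE.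
have Zsym : Z^T = Z.
  have gen : forall k (Cb : 'M_(n, k)), (Cb^T *m D *m Cb)^T = Cb^T *m D *m Cb.
    by move=> k Cb; rewrite !trmx_mul trmxK sD mulmxA.
  exact: gen.
have Z0 : Z = 0.
  apply/matrixP => k l; rewrite [RHS]mxE.
  case: (leqP k l) => kl.
    by rewrite -sumE (cT (k, l)) // inE.
  by rewrite -Zsym mxE -sumE (cT (l, k)) // inE /= ltnW.
apply: (not_ext_sym ext sD).
- case: i ci => a b ci.
  have iS : (a, b) \in Su by apply: contraR ci => h; rewrite (cS _ h) eqxx.
  rewrite inE /= in iS; case/andP: iS => _ ab.
  apply/eqP => /matrixP /(_ a b); rewrite !mxE => h.
  case: (eqVneq a b) => [eab|nab].
    subst b; have : c (a, a) = 0 by lra.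
    by move/eqP: ci.
  have : c (b, a) = 0.
    apply: cS; rewrite inE /=; apply/negP => /andP [_ ba]; move/eqP: nab; apply.
    by apply/val_inj/eqP; rewrite eqn_leq ab ba.
  by move=> cba; rewrite cba addr0 in h; move/eqP: ci.
- have e : forall k (Cb : 'M_(n, k)) (Rb : 'M_(k, n)),
      Cb *m Rb = A -> A *m D *m A = Rb^T *m (Cb^T *m D *m Cb) *m Rb.
    by move=> k Cb Rb eA; rewrite -{1}symA -eA trmx_mul !mulmxA.
  by rewrite (e _ _ _ (mulmx_base A)) -/Z Z0 mulmx0 mul0mx.
- move=> a b; rewrite !mxE => h.
  case: (eqVneq (c (a, b)) 0) => [cab|cab].
    rewrite cab add0r in h.
    have : (b, a) \in Su by apply: contraR h => h'; rewrite (cS _ h') eqxx.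
    rewrite inE => /andP [baS _].
    by move: baS; rewrite symS inE.
  have : (a, b) \in Su by apply: contraR cab => h'; rewrite (cS _ h') eqxx.
  by rewrite !inE => /andP [/orP [] -> _]; rewrite ?orbT.
Qed.


Lemma conv0 (R : realType) (a b t : R) : 0 <= a -> 0 <= b -> 0 < t < 1 ->
  t * a + (1 - t) * b = 0 -> a = 0 /\ b = 0.
Proof.
move=> a0 b0 /andP [t0 t1] h.
have ta : 0 <= t * a by apply: mulr_ge0; lra.
have tb : 0 <= (1 - t) * b by apply: mulr_ge0; lra.
have ta0 : t * a = 0 by lra.
have tb0 : (1 - t) * b = 0 by lra.
move/eqP: ta0; rewrite mulf_eq0 (gt_eqF t0) /= => /eqP ->.
move/eqP: tb0; rewrite mulf_eq0 subr_eq0 eq_sym (lt_eqF t1) /= => /eqP ->.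
by [].
Qed.

Lemma sharp1 (R : realType) n r : (1 <= r)%N -> (r <= n)%N ->
  exists A : 'M[R]_n, A^T = A /\ \rank A = r /\
    exists P, extreme_point (feas_gen A) P /\ nnz (P.1 - P.2) = (r ^ 2)%N.
Proof.
move=> r1 rn.
set Dm : 'M[R]_n := pid_mx r.
set J := Jm R n r.
set c : R := (r.+1%:R)^-1.
have hc : c * r%:R = 1 - c.
  have h : (r%:R + 1 : R) != 0 by rewrite -[1]/(1%:R) -natrD pnatr_eq0 addn1.
  rewrite /c -addn1 natrD; field; exact: h.
set A := Dm - c *: J.
set H := Dm + J.
have AH : A *m H = Dm.
  rewrite /A /H mulmxBl !mulmxDr pidpid pidJ -!scalemxAl Jpid JJ // scalerA hc.
  apply/matrixP => i j; rewrite !mxE; ring.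
have HA : H *m A = Dm.
  rewrite /A /H mulmxDl !mulmxBr pidpid Jpid -!scalemxAr pidJ JJ // scalerA hc.
  apply/matrixP => i j; rewrite !mxE; ring.
have DA : Dm *m A = A by rewrite /A mulmxBr pidpid -scalemxAr pidJ.
have DH : Dm *m H = H by rewrite /H mulmxDr pidpid pidJ.
exists A; split.
  rewrite /A raddfB /= tr_pid_mx; congr (_ - _).
  by apply/matrixP => i j; rewrite !mxE andbC.
split.
  apply/eqP; rewrite eqn_leq; apply/andP; split.
    by rewrite -DA; apply: leq_trans (mxrankM_maxl _ _) _; rewrite rank_pid_mx.
  have := mxrankM_maxl A H; rewrite AH rank_pid_mx //.
have H0 i j : 0 <= H i j by rewrite !mxE; apply: addr_ge0; apply: ler0n.
have Hsupp i j : (H i j != 0) = ((i < r)%N && (j < r)%N).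
  rewrite !mxE -natrD pnatr_eq0.
  case: (eqVneq (i : nat) j) => [ij|ij]; first by rewrite ij; case: (j < r)%N; rewrite /= ?eqxx.
  by case: (i < r)%N; case: (j < r)%N.
have DYD (Y : 'M[R]_n) : (forall i j : 'I_n, ~~ ((i < r)%N && (j < r)%N) -> Y i j = 0) ->
    Dm *m Y *m Dm = Y.
  move=> hY; apply/matrixP => i j; rewrite mul_pidE pid_mulE.
  have := hY i j; case: (i < r)%N; case: (j < r)%N => /= h;
    rewrite ?mul1r ?mulr1 ?mul0r ?mulr0 // h //.
have uniq (Y : 'M[R]_n) : (forall i j : 'I_n, ~~ ((i < r)%N && (j < r)%N) -> Y i j = 0) ->
    A *m Y *m A = A -> Y = H.
  move=> hY hA; rewrite -(DYD Y hY) -{1}HA -AH.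
  have -> : H *m A *m Y *m (A *m H) = H *m (A *m Y *m A) *m H by rewrite !mulmxA.
  by rewrite hA HA DH.
exists (H, 0); split; last first.
  rewrite /nnz /= subr0.
  have -> : [set p : 'I_n * 'I_n | H p.1 p.2 != 0] =
      setX [set i : 'I_n | (i < r)%N] [set i : 'I_n | (i < r)%N].
    by apply/setP => -[i j]; rewrite !inE /= Hsupp.
  by rewrite cardsX card_lt.
split.
  split; first by rewrite /= subr0 AH DA.
  by split => i j /=; [exact: H0 | rewrite mxE].
move=> y z t [fy [y1 y2]] [fz [z1 z2]] ht [eH e0].
have Y2 i j : y.2 i j = 0 /\ z.2 i j = 0.
  have := congr1 (fun M : 'M[R]_n => M i j) e0; rewrite !mxE => /esym.
  exact: conv0.
have Y1 (i j : 'I_n) : ~~ ((i < r)%N && (j < r)%N) -> y.1 i j = 0 /\ z.1 i j = 0.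
  move=> h; have hH : H i j = 0 by apply/eqP; rewrite -[_ == _]negbK Hsupp h.
  have := congr1 (fun M : 'M[R]_n => M i j) eH; rewrite hH !mxE => /esym.
  exact: conv0.
have Y20 : y.2 = 0 by apply/matrixP => i j; rewrite mxE; case: (Y2 i j).
have Z20 : z.2 = 0 by apply/matrixP => i j; rewrite mxE; case: (Y2 i j).
have ey : y.1 = H.
  apply: uniq => [i j /(Y1 i j) [] //|]; by move: fy; rewrite Y20 subr0.
have ez : z.1 = H.
  apply: uniq => [i j /(Y1 i j) [] //|]; by move: fz; rewrite Z20 subr0.
by rewrite [y]surjective_pairing [z]surjective_pairing ey ez Y20 Z20.
Qed.



Lemma sum_ind (R : realType) n (k : 'I_n) (F : 'I_n -> R) :
  \sum_a (a == k)%:R * F a = F k.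
Proof.
rewrite (bigD1 k) //= eqxx mul1r big1 ?addr0 // => a /negPf ->; by rewrite mul0r.
Qed.

Lemma sum_ind2 (R : realType) n (k : 'I_n) (F : 'I_n -> R) :
  \sum_a F a * (a == k)%:R = F k.
Proof.
rewrite (bigD1 k) //= eqxx mulr1 big1 ?addr0 // => a /negPf ->; by rewrite mulr0.
Qed.

Definition Um (R : realType) n r (r' : 'I_n) : 'M[R]_n :=
  \matrix_(a, k) (((a == k)%:R + (a == r')%:R) * ((k < r)%N)%:R).

Lemma UtE (R : realType) n r (r' : 'I_n) (Y : 'M[R]_n) k b :
  ((Um R r r')^T *m Y) k b = ((k < r)%N)%:R * (Y k b + Y r' b).
Proof.
rewrite mxE; under eq_bigr do rewrite !mxE mulrDl mulrDl.
rewrite big_split /=.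
under eq_bigr do rewrite -mulrA.
rewrite sum_ind.
under eq_bigr do rewrite -mulrA.
rewrite sum_ind; ring.
Qed.

Lemma MUE (R : realType) n r (r' : 'I_n) (M : 'M[R]_n) a l :
  (M *m Um R r r') a l = (M a l + M a r') * ((l < r)%N)%:R.
Proof.
rewrite mxE; under eq_bigr do rewrite !mxE mulrA mulrDr mulrDl.
rewrite big_split /=.
under eq_bigr do rewrite -mulrA mulrC -mulrA.
rewrite sum_ind.
under eq_bigr do rewrite -mulrA mulrC -mulrA.
rewrite sum_ind; ring.
Qed.

Lemma UYU (R : realType) n r (r' : 'I_n) (Y : 'M[R]_n) k l :
  ((Um R r r')^T *m Y *m Um R r r') k l =
  ((k < r)%N)%:R * ((l < r)%N)%:R * (Y k l + Y k r' + Y r' l + Y r' r').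
Proof. rewrite MUE !UtE; ring. Qed.

Lemma pidE (R : realType) n r (i j : 'I_n) :
  (pid_mx r : 'M[R]_n) i j = (i == j)%:R * ((i < r)%N)%:R.
Proof. by rewrite mxE -natrM mulnb. Qed.

Lemma DU (R : realType) n r (r' : 'I_n) : val r' = r ->
  (pid_mx r : 'M[R]_n) *m Um R r r' = pid_mx r.
Proof.
move=> hr; apply/matrixP => a k; rewrite pid_mulE !mxE.
case: (ltnP a r) => h; last by rewrite !mul0r andbF.
have -> : (a == r') = false by apply/negP => /eqP e; rewrite e hr ltnn in h.
case: (eqVneq a k) => [<-|ne]; first by rewrite h eqxx /=; ring.
rewrite andbT (_ : (a == k :> nat) = false).
  by rewrite /= mul1r addr0 mul0r.
by apply/negP => /eqP/val_inj e; rewrite e eqxx in ne.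
Qed.

Lemma UD (R : realType) n r (r' : 'I_n) :
  Um R r r' *m (pid_mx r : 'M[R]_n) = Um R r r'.
Proof.
apply/matrixP => a k; rewrite mul_pidE !mxE.
by case: (k < r)%N; rewrite /= ?mulr0 ?mulr1.
Qed.

Definition Hm (R : realType) n r : 'M[R]_n :=
  \matrix_(i, j) ((i != j) && (i < r.+1)%N && (j < r.+1)%N)%:R.

Lemma sharp2 (R : realType) n r : (1 <= r)%N -> (r < n)%N ->
  exists A : 'M[R]_n, A^T = A /\ \rank A = r /\
    exists P, extreme_point (feas_sym A) P /\ nnz (P.1 - P.2) = (r ^ 2 + r)%N.
Proof.
move=> r1 rn.
set r' : 'I_n := Ordinal rn.
have hr : val r' = r by [].
have rle : (r <= n)%N := ltnW rn.
set Dm : 'M[R]_n := pid_mx r.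
set J := Jm R n r.
set U := Um R r r'.
set T := 3%:R *: J - Dm.
set c : R := 3%:R / (3%:R * r%:R - 1).
have r1R : 1 <= (r%:R : R) by rewrite ler1n.
have nz : (3%:R * r%:R - 1 : R) != 0 by rewrite gt_eqF //; lra.
have hc : c * (3%:R * r%:R - 1) = 3%:R by rewrite /c divfK.
set S := c *: J - Dm.
have TS : T *m S = Dm.
  rewrite /T /S mulmxBl !mulmxBr -!scalemxAl -!scalemxAr JJ // Jpid pidJ pidpid !scalerA.
  rewrite (_ : 3%:R * c * r%:R = 3%:R + c); last by lra.
  by apply/matrixP => i j; rewrite !mxE; ring.
have ST : S *m T = Dm.
  rewrite /T /S mulmxBl !mulmxBr -!scalemxAl -!scalemxAr JJ // Jpid pidJ pidpid !scalerA.
  rewrite (_ : c * 3%:R * r%:R = 3%:R + c); last by lra.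
  by apply/matrixP => i j; rewrite !mxE; ring.
have DS : Dm *m S = S by rewrite /S mulmxBr -scalemxAr pidJ pidpid.
have SD : S *m Dm = S by rewrite /S mulmxBl -scalemxAl Jpid pidpid.
have DT : Dm *m T = T by rewrite /T mulmxBr -scalemxAr pidJ pidpid.
have DUe : Dm *m U = Dm by exact: DU.
have UDe : U *m Dm = U by exact: UD.
have UtD : U^T *m Dm = Dm by rewrite -[Dm]tr_pid_mx -trmx_mul DUe.
have DUt : Dm *m U^T = U^T by rewrite -[Dm]tr_pid_mx -trmx_mul UDe.
have St : S^T = S.
  rewrite /S raddfB /= tr_pid_mx; congr (_ - _).
  by apply/matrixP => i j; rewrite !mxE andbC.
set A := U *m S *m U^T.
have DA : Dm *m A = S *m U^T by rewrite /A !mulmxA DUe DS.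
have AD : A *m Dm = U *m S by rewrite /A -!mulmxA UtD SD.
have key : forall Y, A *m Y *m A = A -> U^T *m Y *m U = T.
  move=> Y hY.
  have eL : Dm *m (A *m Y *m A) *m Dm = S *m (U^T *m Y *m U) *m S.
    transitivity ((Dm *m A) *m Y *m (A *m Dm)); first by rewrite !mulmxA.
    by rewrite DA AD !mulmxA.
  have eR : Dm *m A *m Dm = S by rewrite DA -mulmxA UtD SD.
  have h1 : S *m (U^T *m Y *m U) *m S = S by rewrite -eL hY eR.
  have eL2 : T *m (S *m (U^T *m Y *m U) *m S) *m T = Dm *m (U^T *m Y *m U) *m Dm.
    transitivity ((T *m S) *m (U^T *m Y *m U) *m (S *m T)); first by rewrite !mulmxA.
    by rewrite TS ST.
  have eX : Dm *m (U^T *m Y *m U) *m Dm = U^T *m Y *m U.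
    by rewrite !mulmxA DUt -mulmxA UDe.
  by rewrite -eX -eL2 h1 TS DT.
set H := Hm R n r.
have ltr' (i : 'I_n) : (i < r)%N -> (i == r') = false.
  by move=> h; apply/negP => /eqP e; rewrite e hr ltnn in h.
have Hkl (k l : 'I_n) : (k < r)%N -> (l < r)%N -> H k l = (k != l)%:R.
  by move=> hk hl; rewrite mxE !ltnS (ltnW hk) (ltnW hl) !andbT.
have Hkr (k : 'I_n) : (k < r)%N -> H k r' = 1.
  by move=> hk; rewrite mxE !ltnS (ltnW hk) (ltr' _ hk) hr leqnn.
have Hrk (k : 'I_n) : (k < r)%N -> H r' k = 1.
  by move=> hk; rewrite mxE !ltnS (ltnW hk) eq_sym (ltr' _ hk) hr leqnn.
have Hrr : H r' r' = 0 by rewrite mxE eqxx.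
have Tkl (k l : 'I_n) : T k l = ((k < r)%N)%:R * ((l < r)%N)%:R * (3%:R - (k == l)%:R).
  rewrite /T !mxE -[(k == l :> nat)]/(k == l); case: (eqVneq k l) => [<-|ne].
    by rewrite ?eqxx; case: (k < r)%N => /=; lra.
  by case: (k < r)%N; case: (l < r)%N => /=; lra.
have UHU : U^T *m H *m U = T.
  apply/matrixP => k l; rewrite UYU Tkl.
  case: (ltnP k r) => hk; last by rewrite !mul0r.
  case: (ltnP l r) => hl; last by rewrite !mulr0 !mul0r.
  rewrite Hkl // Hkr // Hrk // Hrr.
  by case: (eqVneq k l) => _ /=; ring.
have isr (i : 'I_n) : (i < r.+1)%N -> ~~ (i < r)%N -> i = r'.
  move=> h1 h2; apply/val_inj => /=; apply/eqP; rewrite eqn_leq -ltnS h1 /=.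
  by rewrite leqNgt.
have Hsupp (i j : 'I_n) : (H i j != 0) = [&& i != j, (i < r.+1)%N & (j < r.+1)%N].
  by rewrite mxE pnatr_eq0 andbA; case: (_ && _ && _).
have uniqH (Y : 'M[R]_n) : Y^T = Y -> (forall i j, H i j = 0 -> Y i j = 0) ->
    A *m Y *m A = A -> Y = H.
  move=> sY hY hA; have eY := key Y hA.
  have ys i j : Y j i = Y i j by rewrite -[in RHS]sY mxE.
  have Ykk (k : 'I_n) : Y k k = 0 by apply: hY; rewrite mxE eqxx.
  have Yrr : Y r' r' = 0 by apply: hY.
  have Ykr (k : 'I_n) : (k < r)%N -> Y k r' = 1.
    move=> hk; have := congr1 (fun M : 'M[R]_n => M k k) eY.
    rewrite /= UYU Tkl hk Ykk Yrr ys eqxx /=.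
    move=> h; lra.
  have Ykl (k l : 'I_n) : (k < r)%N -> (l < r)%N -> k != l -> Y k l = 1.
    move=> hk hl ne; have := congr1 (fun M : 'M[R]_n => M k l) eY.
    rewrite /= UYU Tkl hk hl Ykr // (ys l r') Ykr // Yrr (negPf ne) /=.
    move=> h; lra.
  apply/matrixP => i j.
  have [h0|hn0] := eqVneq (H i j) 0; first by rewrite h0 hY.
  move: (hn0); rewrite Hsupp => /and3P [ne hi hj].
  have -> : H i j = 1 by move: hn0; rewrite mxE ne hi hj.
  case: (ltnP i r) => hi'; case: (ltnP j r) => hj'.
  - exact: Ykl.
  - have ej : j = r' by apply: isr; rewrite // -leqNgt.
    by rewrite ej Ykr.
  - have ei : i = r' by apply: isr; rewrite // -leqNgt.
    by rewrite ei (ys j r') Ykr.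
  - have ei : i = r' by apply: isr; rewrite // -leqNgt.
    have ej : j = r' by apply: isr; rewrite // -leqNgt.
    by rewrite ei ej eqxx in ne.
have AHA : A *m H *m A = A.
  transitivity (U *m S *m (U^T *m H *m U) *m S *m U^T); first by rewrite /A !mulmxA.
  by rewrite UHU -(mulmxA U S T) ST UDe.
have Hsym : H^T = H.
  apply/matrixP => i j; rewrite !mxE eq_sym.
  by case: (i < r.+1)%N; case: (j < r.+1)%N; rewrite ?andbF ?andbT.
have H0 i j : 0 <= H i j by rewrite mxE ler0n.
exists A; split.
  by rewrite /A !trmx_mul trmxK St mulmxA.
split.
  have DAD : Dm *m A *m Dm = S by rewrite DA -mulmxA UtD SD.
  have rS : \rank S = r.
    apply/eqP; rewrite eqn_leq; apply/andP; split.
      by rewrite -DS; apply: leq_trans (mxrankM_maxl _ _) _; rewrite rank_pid_mx.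
    by have := mxrankM_maxl S T; rewrite ST rank_pid_mx.
  apply/eqP; rewrite eqn_leq; apply/andP; split.
    rewrite -rS /A; apply: leq_trans (mxrankM_maxl _ _) _; exact: mxrankM_maxr.
  rewrite -{1}rS -DAD; apply: leq_trans (mxrankM_maxl _ _) _; exact: mxrankM_maxr.
exists (H, 0); split; last first.
  rewrite /nnz /= subr0.
  set B := [set i : 'I_n | (i < r.+1)%N].
  set Dg := [set p : 'I_n * 'I_n | p.1 == p.2].
  have e1 : [set p : 'I_n * 'I_n | H p.1 p.2 != 0] = setX B B :\: Dg.
    by apply/setP => -[i j]; rewrite !inE /= Hsupp.
  have e2 : setX B B :&: Dg = [set (i, i) | i in B].
    rewrite diag_set; apply/setP => -[i j]; rewrite !inE /=.
    by case: eqVneq => [->|]; rewrite ?andbT ?andbF ?andbb.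
  have := cardsID Dg (setX B B); rewrite e2 card_diag cardsX -e1 card_lt //.
  move=> h; apply/eqP; rewrite -(eqn_add2l r.+1) h; apply/eqP.
  rewrite !mulSn mulnS !mulnn; lia.
split.
  split; first by split; [rewrite /= subr0 AHA | split => i j /=; [exact: H0 | rewrite mxE]].
  by split; [exact: Hsym | apply/matrixP => i j; rewrite !mxE].
move=> y z t [[fy [y1 y2]] [sy1 sy2]] [[fz [z1 z2]] [sz1 sz2]] ht [eH e0].
have Y2 i j : y.2 i j = 0 /\ z.2 i j = 0.
  have := congr1 (fun M : 'M[R]_n => M i j) e0; rewrite !mxE => /esym.
  exact: conv0.
have Y1 (i j : 'I_n) : H i j = 0 -> y.1 i j = 0 /\ z.1 i j = 0.
  move=> hH; have := congr1 (fun M : 'M[R]_n => M i j) eH; rewrite hH !mxE => /esym.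
  exact: conv0.
have Y20 : y.2 = 0 by apply/matrixP => i j; rewrite mxE; case: (Y2 i j).
have Z20 : z.2 = 0 by apply/matrixP => i j; rewrite mxE; case: (Y2 i j).
have ey : y.1 = H.
  apply: uniqH => // [i j /(Y1 i j) [] //|]; by move: fy; rewrite Y20 subr0.
have ez : z.1 = H.
  apply: uniqH => // [i j /(Y1 i j) [] //|]; by move: fz; rewrite Z20 subr0.
by rewrite [y]surjective_pairing [z]surjective_pairing ey ez Y20 Z20.
Qed.

Unset Implicit Arguments.

Theorem proposition2p1 (R : realType) :
  (* (1) bound *)
  (forall (n : nat) (A : 'M[R]_n), A^T = A ->
     forall P, extreme_point (feas_gen A) P -> (nnz (P.1 - P.2) <= (\rank A) ^ 2)%N)
  /\
  (* (1) sharpness, for all n >= r >= 1 *)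
  (forall (n r : nat), (1 <= r)%N -> (r <= n)%N ->
     exists A : 'M[R]_n, A^T = A /\ \rank A = r /\
       exists P, extreme_point (feas_gen A) P /\ nnz (P.1 - P.2) = (r ^ 2)%N)
  /\
  (* (2) bound *)
  (forall (n : nat) (A : 'M[R]_n), A^T = A ->
     forall P, extreme_point (feas_sym A) P -> (nnz (P.1 - P.2) <= (\rank A) ^ 2 + \rank A)%N)
  /\
  (* (2) sharpness, for n - 2 >= r >= 3 *)
  (forall (n r : nat), (3 <= r)%N -> (r + 2 <= n)%N ->
     exists A : 'M[R]_n, A^T = A /\ \rank A = r /\
       exists P, extreme_point (feas_sym A) P /\ nnz (P.1 - P.2) = (r ^ 2 + r)%N).
Proof.
split; first by move=> n A _ P; exact: bound_gen.
split; first by move=> n r h1 h2; exact: sharp1.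
split; first by move=> n A sA P; exact: bound_sym.
move=> n r h1 h2; apply: sharp2; lia.
Qed.
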